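(* Let $\tilde g$ be a continuous totally positive function of one of the following forms: either $\tilde g=g$ with $$\hat g(\omega)=\prod_{\nu=1}^{\infty}\frac{e^{2\pi i\omega/a_\nu}}{1+2\pi i\omega/a_\nu},$$ where $(a_\nu)_{\nu\in\mathbb{N}}\subset\mathbb{R}\setminus\{0\}$ with $\sum_{\nu}a_\nu^{-2}<\infty$, or $\tilde g=g_n$ with $$\hat g_n(\omega)=\prod_{\nu=1}^{n}\frac{e^{2\pi i\omega/a_\nu}}{1+2\pi i\omega/a_\nu},\qquad a_1,\dots,a_n\in\mathbb{R}\setminus\{0\}.$$ Then the function $x\mapsto\mathrm Z\tilde g(x,\tfrac12)$ is real-valued, $2$-periodic, and not identically zero.
   Context: The Fourier transform is $\hat f(\omega)=\int_{\mathbb{R}} f(t)e^{-2\pi i t\omega}\,dt$. The Zak transform is $\mathrm Zf(x,\omega)=\sum_{k\in\mathbb{Z}} f(x+k)e^{-2\pi i k\omega}$; in particular $\mathrm Z\tilde g(x,\tfrac12)=\sum_{k\in\mathbb{Z}}(-1)^k\tilde g(x+k)$. *)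

(* Defs.v *)
From Stdlib Require Import Reals.
From mathcomp Require Import all_boot all_algebra.
From mathcomp Require Import Rstruct.
From Coquelicot Require Import Coquelicot.

Set Implicit Arguments.
Unset Strict Implicit.
Unset Printing Implicit Defensive.

Definition totally_positive (f : R -> R) : Prop :=
  forall (n : nat) (x y : 'I_n -> R),
    (forall i j : 'I_n, (i < j)%N -> Rlt (x i) (x j)) ->
    (forall i j : 'I_n, (i < j)%N -> Rlt (y i) (y j)) ->
    Rle 0%R (\det (\matrix_(i < n, j < n) f (Rminus (x i) (y j))))%R.

Open Scope R_scope.

Definition cexpi (theta : R) : C := (cos theta, sin theta).

Definition is_fourier (f : R -> R) (w : R) (v : C) : Prop :=
  is_RInt_gen (fun t => Cmult (RtoC (f t)) (cexpi (- (2 * PI * t * w))))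
    (Rbar_locally m_infty) (Rbar_locally p_infty) v.

Definition factor (a w : R) : C :=
  Cdiv (cexpi (2 * PI * w / a)) (Cplus (RtoC 1) (Cmult Ci (RtoC (2 * PI * w / a)))).

(* Partial product  prod_{nu = 1}^{N} factor (a_nu) w,  where the sequence
   (a_nu)_{nu >= 1} is encoded by a : nat -> R with a_nu = a (nu - 1). *)
Fixpoint partial_prod (a : nat -> R) (w : R) (N : nat) : C :=
  match N with
  | O => RtoC 1
  | S N' => Cmult (partial_prod a w N') (factor (a N') w)
  end.

(* Zak transform at omega = 1/2:  Z f (x, 1/2) = sum_{k in Z} (-1)^k f(x+k),
   the bi-infinite series being the sum of its two convergent halves
   sum_{k >= 0} (-1)^k f(x+k)  and  sum_{k >= 1} (-1)^k f(x-k). *)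
Definition is_zak_half (f : R -> R) (x z : R) : Prop :=
  exists s1 s2 : R,
    is_series (fun k : nat => (-1) ^ k * f (x + INR k)) s1 /\
    is_series (fun k : nat => (-1) ^ (S k) * f (x - INR (S k))) s2 /\
    z = s1 + s2.

(* Main.v *)
Require Import Defs.
From Stdlib Require Import Reals.
From Coquelicot Require Import Coquelicot.
From Stdlib Require Import Lra Lia Classical FunctionalExtensionality.
From mathcomp Require all_boot all_algebra Rstruct.
Open Scope R_scope.

Module TPM.
Import mathcomp.boot.all_boot mathcomp.algebra.all_algebra mathcomp.reals_stdlib.Rstruct.
Open Scope R_scope.
Lemma tp_nonneg g : totally_positive g -> forall t, 0 <= g t.
Proof.
intros H t.
pose proof (H 1%nat (fun _ => t) (fun _ => 0)) as H1.
rewrite det_mx11 mxE in H1.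
replace t with (t - 0) by lra.
apply H1; intros i j; rewrite (ord1 i) (ord1 j); by [].
Qed.

Lemma tp_R g : totally_positive g -> forall u v, u <= v -> g u * g (v+1) <= g (u+1) * g v.
Proof.
intros H u v Huv.
destruct (Req_dec u v) as [->|Hne]; [lra|].
pose (x := fun i : 'I_2 => if val i == 0%N then 0 else v - u).
pose (y := fun i : 'I_2 => if val i == 0%N then -u-1 else -u).
have Hx : forall i j : 'I_2, (i < j)%N -> x i < x j.
  move=> [[|[|i]] Hi] [[|[|j]] Hj] //= _; rewrite /x /=; lra.
have Hy : forall i j : 'I_2, (i < j)%N -> y i < y j.
  move=> [[|[|i]] Hi] [[|[|j]] Hj] //= _; rewrite /y /=; lra.
pose proof (H 2%nat x y Hx Hy) as H2.
rewrite (expand_det_row _ ord0) !big_ord_recl big_ord0 in H2.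
rewrite /cofactor !det_mx11 !mxE /= in H2.
rewrite /x /y /= in H2.
rewrite /= GRing.expr0 GRing.expr1 in H2. change (0 <= g (0 - (-u-1)) * (1 * g (v-u - - u)) + (g (0 - - u) * (- (1) * g (v-u-(-u-1))) + 0)) in H2.
replace (0 - (-u-1)) with (u+1) in H2 by lra.
replace (v-u - - u) with v in H2 by lra.
replace (0 - - u) with u in H2 by lra.
replace (v-u-(-u-1)) with (v+1) in H2 by lra.
lra.
Qed.

End TPM.

Lemma exR (f : R -> R) a b : (forall t, continuous f t) -> ex_RInt f a b.
Proof. intros Hc. apply (ex_RInt_continuous (V:=R_CompleteNormedModule)). intros; apply Hc. Qed.

Lemma RInt_lb (f : R -> R) a b c : a <= b -> (forall t, continuous f t) ->
  (forall t, a <= t <= b -> c <= f t) -> c * (b - a) <= RInt f a b.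
Proof.
intros Hab Hc H.
assert (E : RInt (fun _ => c) a b = c * (b - a)).
{ rewrite RInt_const. unfold scal; simpl; unfold mult; simpl. ring. }
rewrite <- E. apply RInt_le; auto.
- apply ex_RInt_const.
- apply exR; auto.
- intros; apply H; lra.
Qed.

Lemma RInt_nn (f : R -> R) a b : a <= b -> (forall t, continuous f t) ->
  (forall t, 0 <= f t) -> 0 <= RInt f a b.
Proof. intros; apply RInt_ge_0; auto. apply exR; auto. Qed.

Lemma decay (f : R -> R) (Hc : forall t, continuous f t) (Hp : forall t, 0 <= f t)
  (HR : forall u v, u <= v -> f u * f (v+1) <= f (u+1) * f v) (B : R)
  (HB : forall a b, a <= b -> RInt f a b <= B) :
  exists p rho, 0 <= rho < 1 /\ forall u, p <= u -> f (u+1) <= rho * f u.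
Proof.
destruct (classic (exists p, 0 < f p /\ f (p+1) < f p)) as [[p [H1 H2]]|Hn].
- exists p, (f (p+1) / f p).
  set (r := f (p+1) / f p).
  assert (Hr : r * f p = f (p+1)) by (unfold r; field; lra).
  pose proof (Hp (p+1)).
  split; [split; nra|].
  intros u Hu. specialize (HR p u Hu).
  apply Rmult_le_reg_l with (f p); [lra|]. nra.
- destruct (classic (exists p0, 0 < f p0)) as [[p0 Hp0]|Hz].
  + exfalso.
    assert (Hn' : forall p, 0 < f p -> f p <= f (p+1)).
    { intros p Hfp. destruct (Rle_lt_dec (f p) (f (p+1))); auto. exfalso; apply Hn; eauto. }
    assert (He : 0 < f p0 / 2) by lra.
    destruct (Hc p0 (ball (f p0) (mkposreal _ He)) (locally_ball _ _)) as [d Hd].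
    set (d' := Rmin (d/2) (1/2)).
    assert (Hd'p : 0 < d') by (unfold d'; apply Rmin_pos; pose proof (cond_pos d); lra).
    assert (Hd'1 : d' <= 1/2) by (unfold d'; apply Rmin_r).
    assert (Hd'd : d' <= d/2) by (unfold d'; apply Rmin_l).
    assert (Hloc : forall r, 0 <= r <= d' -> f p0 / 2 <= f (p0 + r)).
    { intros r Hr. assert (Hb : ball p0 d (p0 + r)).
      { unfold ball; simpl; unfold AbsRing_ball, abs, minus, plus, opp; simpl.
        replace (p0 + r + - p0) with r by ring. rewrite Rabs_right; lra. }
      specialize (Hd _ Hb). unfold ball in Hd; simpl in Hd;
      unfold AbsRing_ball, abs, minus, plus, opp in Hd; simpl in Hd.
      apply Rabs_lt_between in Hd. simpl in Hd. lra. }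
    assert (Hk : forall k r, 0 <= r <= d' -> f p0 / 2 <= f (p0 + r + INR k)).
    { induction k; intros r Hr.
      - simpl. rewrite Rplus_0_r. auto.
      - rewrite S_INR. replace (p0 + r + (INR k + 1)) with (p0 + r + INR k + 1) by ring.
        specialize (IHk r Hr). apply Rle_trans with (f (p0 + r + INR k)); auto.
        apply Hn'. lra. }
    assert (Hint : forall K, INR K * (d' * (f p0 / 2)) <= RInt f p0 (p0 + INR K)).
    { induction K.
      - simpl. rewrite Rplus_0_r, RInt_point. unfold zero; simpl. lra.
      - rewrite S_INR.
        rewrite <- (RInt_Chasles f p0 (p0 + INR K) (p0 + (INR K + 1))) by (apply exR; auto).
        rewrite <- (RInt_Chasles f (p0 + INR K) (p0 + INR K + d') (p0 + (INR K + 1))) by (apply exR; auto).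
        unfold plus; simpl.
        assert (L1 : (f p0 / 2) * (p0 + INR K + d' - (p0 + INR K)) <= RInt f (p0 + INR K) (p0 + INR K + d')).
        { apply RInt_lb; auto; [lra|]. intros t Ht.
          replace t with (p0 + (t - p0 - INR K) + INR K) by ring. apply Hk. lra. }
        assert (L2 : 0 <= RInt f (p0 + INR K + d') (p0 + (INR K + 1))).
        { apply RInt_nn; auto. lra. }
        nra. }
    assert (Hpos : 0 < d' * (f p0 / 2)) by nra.
    destruct (INR_archimed (d' * (f p0 / 2)) B Hpos) as [K HK].
    specialize (Hint K). pose proof (HB p0 (p0 + INR K) ltac:(pose proof (pos_INR K); lra)).
    lra.
  + exists 0, 0. split; [lra|]. intros u _.
    assert (forall t, f t = 0).
    { intros t. destruct (Hp t) as [Ht|Ht]; auto. exfalso; apply Hz; eauto. }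
    rewrite !H. lra.
Qed.

Lemma decay_iter (f : R -> R) p rho : 0 <= rho -> (forall t, 0 <= f t) ->
  (forall u, p <= u -> f (u+1) <= rho * f u) ->
  forall u, p <= u -> forall k, f (u + INR k) <= rho ^ k * f u.
Proof.
intros Hr Hp H u Hu k. induction k.
- simpl. rewrite Rplus_0_r. lra.
- rewrite S_INR. replace (u + (INR k + 1)) with (u + INR k + 1) by ring.
  simpl. apply Rle_trans with (rho * f (u + INR k)).
  + apply H. pose proof (pos_INR k); lra.
  + rewrite Rmult_assoc. apply Rmult_le_compat_l; auto.
Qed.

Lemma nat_above r : exists K : nat, r <= INR K.
Proof.
destruct (INR_archimed 1 r) as [K HK]; [lra|]. exists K. lra.
Qed.

Lemma abs_alt n z : 0 <= z -> Rabs ((-1) ^ n * z) = z.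
Proof. intros. rewrite Rabs_mult, pow_1_abs, Rabs_right; lra. Qed.

Lemma geom_ex rho c : 0 <= rho < 1 -> ex_series (fun j => c * rho ^ j).
Proof.
intros H. apply (ex_series_scal_l (K:=R_AbsRing) (V:=R_NormedModule) c (fun j => rho ^ j)).
exists (/ (1 - rho)). apply is_series_geom. rewrite Rabs_right; lra.
Qed.

Lemma series_ex (f : R -> R) p rho : 0 <= rho < 1 -> (forall t, 0 <= f t) ->
  (forall u, p <= u -> f (u+1) <= rho * f u) ->
  forall y, ex_series (fun k => (-1) ^ k * f (y + INR k)).
Proof.
intros Hr Hp H y.
destruct (nat_above (p - y)) as [K HK].
apply (proj2 (ex_series_incr_n (V:=R_NormedModule) _ K)).
apply (ex_series_le (V:=R_CompleteNormedModule)) with (b := fun j => f (y + INR K) * rho ^ j).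
- intros j. change (norm ?x) with (Rabs x). rewrite abs_alt by auto.
  rewrite plus_INR, <- Rplus_assoc, Rmult_comm. apply decay_iter with p; auto; lra.
- apply geom_ex; auto.
Qed.

Lemma tail_unif (f : R -> R) p rho : 0 <= rho < 1 -> (forall t, 0 <= f t) ->
  (forall t, continuous f t) ->
  (forall u, p <= u -> f (u+1) <= rho * f u) ->
  forall lo hi, lo <= hi -> forall eps, 0 < eps -> exists N0, forall N, (N0 <= N)%nat ->
  forall y, lo <= y <= hi ->
  Rabs (Series (fun j => (-1) ^ (N + j) * f (y + INR (N + j)))) <= eps.
Proof.
intros Hr Hp Hc H lo hi Hlh eps Heps.
destruct (nat_above (p - lo)) as [K HK].
assert (Hct : forall c, lo + INR K <= c <= hi + INR K -> continuity_pt f c).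
{ intros c _. apply continuity_pt_filterlim. apply Hc. }
destruct (continuity_ab_maj f (lo + INR K) (hi + INR K) ltac:(lra) Hct) as [Mx [HM _]].
set (M := f Mx). assert (HM0 : 0 <= M) by apply Hp.
assert (Hy : 0 < eps * (1 - rho) / (M + 1)).
{ apply Rdiv_lt_0_compat; [|lra]. apply Rmult_lt_0_compat; lra. }
destruct (pow_lt_1_zero rho ltac:(rewrite Rabs_right; lra) _ Hy) as [N1 HN1].
exists (K + N1)%nat. intros N HN y Hy'.
destruct (Nat.le_exists_sub K N) as [m [Hm _]]; [lia|].
assert (Hmn : (m >= N1)%nat) by lia.
specialize (HN1 m Hmn). rewrite Rabs_right in HN1 by (apply Rle_ge, pow_le; lra).
assert (Hb : forall j, Rabs ((-1) ^ (N + j) * f (y + INR (N + j))) <= (rho ^ m * M) * rho ^ j).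
{ intros j. rewrite abs_alt by auto.
  replace (y + INR (N + j)) with ((y + INR K) + INR (m + j)) by (subst N; rewrite !plus_INR; ring).
  eapply Rle_trans. { apply (decay_iter f p rho); auto; lra. }
  rewrite pow_add. assert (f (y + INR K) <= M) by (apply HM; lra).
  assert (0 <= rho ^ m) by (apply pow_le; lra). assert (0 <= rho ^ j) by (apply pow_le; lra).
  replace (rho ^ m * M * rho ^ j) with ((rho ^ m * rho ^ j) * M) by ring.
  apply Rmult_le_compat_l; auto. apply Rmult_le_pos; auto. }
assert (Hex : ex_series (fun j => (rho ^ m * M) * rho ^ j)) by (apply geom_ex; auto).
eapply Rle_trans. apply Series_Rabs.
{ apply (ex_series_le (V:=R_CompleteNormedModule)) with (b := fun j => (rho ^ m * M) * rho ^ j); auto.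
  intros j. change (norm ?x) with (Rabs x). rewrite Rabs_Rabsolu. apply Hb. }
eapply Rle_trans. apply Series_le; [|exact Hex].
{ intros j. split; [apply Rabs_pos|apply Hb]. }
rewrite Series_scal_l, Series_geom by (rewrite Rabs_right; lra).
assert (rho ^ m * M <= eps * (1 - rho) / (M + 1) * M) by (apply Rmult_le_compat_r; lra).
assert (eps * (1 - rho) / (M + 1) * M <= eps * (1 - rho)).
{ unfold Rdiv. set (q := / (M + 1)).
  assert (Hq1 : (M + 1) * q = 1) by (unfold q; field; lra).
  assert (Hq0 : 0 < q) by (unfold q; apply Rinv_0_lt_compat; lra).
  assert (Hq2 : q * M = 1 - q) by lra.
  assert (He2 : 0 < eps * (1 - rho)) by (apply Rmult_lt_0_compat; lra).
  replace (eps * (1 - rho) * q * M) with (eps * (1 - rho) * (q * M)) by ring.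
  rewrite Hq2. nra. }
assert (rho ^ m * M <= eps * (1 - rho)) by lra.
apply Rle_trans with ((eps * (1 - rho)) * / (1 - rho)); [|right; field; lra].
apply Rmult_le_compat_r; [left; apply Rinv_0_lt_compat; lra| lra].
Qed.

Fixpoint psum (c : nat -> R) (N : nat) : R :=
  match N with O => 0 | S n => psum c n + c n end.

Lemma tail_series c s N : is_series c s -> is_series (fun j => c (N + j)%nat) (s - psum c N).
Proof.
intros H. induction N.
- simpl. rewrite Rminus_0_r. exact H.
- assert (H2 := is_series_incr_1 (V:=R_NormedModule) (fun j => c (N + j)%nat) (s - psum c N - c N)).
  simpl. replace (s - (psum c N + c N)) with (s - psum c N - c N) by ring.
  eapply is_series_ext; [|apply H2].
  + intros n. simpl. replace (N + S n)%nat with (S (N + n)) by lia. reflexivity.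
  + match goal with |- is_series _ ?l => replace l with (s - psum c N) end; auto.
    rewrite Nat.add_0_r. unfold plus; simpl. ring.
Qed.

Lemma cont_mult (f g : R -> R) t : continuous f t -> continuous g t -> continuous (fun x => f x * g x) t.
Proof. intros. apply (continuous_mult (K:=R_AbsRing) f g); auto. Qed.
Lemma cont_plus (f g : R -> R) t : continuous f t -> continuous g t -> continuous (fun x => f x + g x) t.
Proof. intros. apply (continuous_plus (V:=R_NormedModule) f g); auto. Qed.
Lemma cont_shift (f : R -> R) v t : (forall t, continuous f t) -> continuous (fun x => f (x + v)) t.
Proof. intros H. apply (continuous_comp (fun x => x + v) f). 
  apply (continuous_plus (V:=R_NormedModule) (fun x => x) (fun _ => v)); [apply continuous_id|apply continuous_const].
  apply H. Qed.

Lemma RInt_shift (f : R -> R) v a b : (forall t, continuous f t) ->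
  RInt (fun x => f (x + v)) a b = RInt f (a + v) (b + v).
Proof.
intros Hc. pose proof (RInt_comp_lin (V:=R_CompleteNormedModule) f 1 v a b) as H.
rewrite !Rmult_1_l in H. rewrite <- H by (apply exR; auto).
apply RInt_ext. intros x _. unfold scal; simpl; unfold mult; simpl. rewrite !Rmult_1_l. reflexivity.
Qed.

Ltac req := match goal with |- ?a = ?b => change (@eq R a b) end.

Definition aterm (g : R -> R) x k := (-1) ^ k * g (x + INR k).
Definition bterm (g : R -> R) x k := (-1) ^ (S k) * g (x - INR (S k)).

Section Main.
Variables (g phi : R -> R).
Hypothesis Hgc : forall t, continuous g t.
Hypothesis Hpc : forall t, continuous phi t.
Hypothesis Hpb : forall t, Rabs (phi t) <= 1.
Hypothesis Hpp : forall t, phi (t + 1) = - phi t.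

Let h t := g t * phi t.

Lemma hc t : continuous h t.
Proof. apply cont_mult; auto. Qed.

Lemma phi_plus x k : phi (x + INR k) = (-1) ^ k * phi x.
Proof.
induction k. simpl. rewrite Rplus_0_r; ring.
rewrite S_INR. replace (x + (INR k + 1)) with ((x + INR k) + 1) by ring.
rewrite Hpp, IHk. simpl. ring.
Qed.

Lemma sq_alt k : (-1) ^ k * (-1) ^ k = 1.
Proof. rewrite <- Rpow_mult_distr. replace (-1 * -1) with 1 by ring. apply pow1. Qed.

Lemma phi_minus x k : phi (x - INR k) = (-1) ^ k * phi x.
Proof.
pose proof (phi_plus (x - INR k) k) as E. replace (x - INR k + INR k) with x in E by ring.
rewrite E, <- Rmult_assoc, sq_alt, Rmult_1_l. reflexivity.
Qed.

Lemma cont_pA N t : continuous (fun x => psum (aterm g x) N) t.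
Proof.
induction N; simpl.
- apply continuous_const.
- apply cont_plus; auto. unfold aterm. apply cont_mult. apply continuous_const.
  apply cont_shift; auto.
Qed.

Lemma cont_pB N t : continuous (fun x => psum (bterm g x) N) t.
Proof.
induction N; simpl.
- apply continuous_const.
- apply cont_plus; auto. unfold bterm. apply cont_mult. apply continuous_const.
  apply (cont_shift g (- INR (S N))); auto.
Qed.

Lemma cont_psumA N t : continuous (fun x => psum (aterm g x) N * phi x) t.
Proof.
apply cont_mult; auto. induction N; simpl.
- apply continuous_const.
- apply cont_plus; auto. unfold aterm. apply cont_mult. apply continuous_const.
  apply cont_shift; auto.
Qed.

Lemma cont_psumB N t : continuous (fun x => psum (bterm g x) N * phi x) t.
Proof.
apply cont_mult; auto. induction N; simpl.
- apply continuous_const.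
- apply cont_plus; auto. unfold bterm. apply cont_mult. apply continuous_const.
  apply (cont_shift g (- INR (S N))); auto.
Qed.

Lemma IA N : RInt h 0 (INR N) = RInt (fun x => psum (aterm g x) N * phi x) 0 1.
Proof.
induction N.
- simpl. rewrite RInt_point. transitivity (RInt (fun _ : R => 0) 0 1).
  + rewrite RInt_const. change (0 = (1-0)*0). ring.
  + apply RInt_ext. intros x _. simpl. rewrite Rmult_0_l. reflexivity.
- rewrite <- (RInt_Chasles h 0 (INR N) (INR (S N))) by (apply exR; apply hc).
  rewrite IHN.
  assert (E : RInt h (INR N) (INR (S N)) = RInt (fun x => aterm g x N * phi x) 0 1).
  { rewrite S_INR. replace (INR N) with (0 + INR N) at 1 by ring.
    replace (INR N + 1) with (1 + INR N) by ring.
    rewrite <- RInt_shift by apply hc. apply RInt_ext. intros x _.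
    unfold h, aterm. rewrite phi_plus. req; ring. }
  rewrite E.
  rewrite (RInt_ext (fun x => psum (aterm g x) (S N) * phi x)
     (fun x => plus (psum (aterm g x) N * phi x) (aterm g x N * phi x)))
     by (intros x _; simpl; unfold plus; simpl; req; ring).
  rewrite (RInt_plus (V:=R_CompleteNormedModule)). reflexivity.
  + apply exR. apply cont_psumA.
  + apply exR. intros t. apply cont_mult; auto. unfold aterm. apply cont_mult.
    apply continuous_const. apply cont_shift; auto.
Qed.

Lemma IB N : RInt h (- INR N) 0 = RInt (fun x => psum (bterm g x) N * phi x) 0 1.
Proof.
induction N.
- simpl. rewrite Ropp_0, RInt_point. transitivity (RInt (fun _ : R => 0) 0 1).
  + rewrite RInt_const. change (0 = (1-0)*0). ring.
  + apply RInt_ext. intros x _. simpl. rewrite Rmult_0_l. reflexivity.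
- rewrite <- (RInt_Chasles h (- INR (S N)) (- INR N) 0) by (apply exR; apply hc).
  rewrite IHN.
  assert (E : RInt h (- INR (S N)) (- INR N) = RInt (fun x => bterm g x N * phi x) 0 1).
  { replace (- INR (S N)) with (0 + - INR (S N)) by ring.
    replace (- INR N) with (1 + - INR (S N)) by (rewrite S_INR; ring).
    rewrite <- RInt_shift by apply hc. apply RInt_ext. intros x _.
    unfold h, bterm. replace (x + - INR (S N)) with (x - INR (S N)) by ring.
    rewrite phi_minus. req; ring. }
  rewrite E.
  rewrite (RInt_ext (fun x => psum (bterm g x) (S N) * phi x)
     (fun x => plus (bterm g x N * phi x) (psum (bterm g x) N * phi x)))
     by (intros x _; simpl; unfold plus; simpl; req; ring).
  rewrite (RInt_plus (V:=R_CompleteNormedModule)). reflexivity.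
  + apply exR. intros t. apply cont_mult; auto. unfold bterm. apply cont_mult.
    apply continuous_const. apply (cont_shift g (- INR (S N))); auto.
  + apply exR. apply cont_psumB.
Qed.


Lemma IN N : RInt h (- INR N) (INR N) =
  RInt (fun x => (psum (aterm g x) N + psum (bterm g x) N) * phi x) 0 1.
Proof.
rewrite <- (RInt_Chasles h (- INR N) 0 (INR N)) by (apply exR; apply hc).
rewrite IA, IB.
rewrite (RInt_ext (fun x => (psum (aterm g x) N + psum (bterm g x) N) * phi x)
     (fun x => plus (psum (bterm g x) N * phi x) (psum (aterm g x) N * phi x)))
     by (intros x _; simpl; unfold plus; simpl; req; ring).
rewrite (RInt_plus (V:=R_CompleteNormedModule)). reflexivity.
+ apply exR. apply cont_psumB.
+ apply exR. apply cont_psumA.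
Qed.

Lemma gen_conv L : is_RInt_gen h (Rbar_locally m_infty) (Rbar_locally p_infty) L ->
  forall eps, 0 < eps -> exists N0, forall N, (N0 <= N)%nat ->
  Rabs (RInt h (- INR N) (INR N) - L) < eps.
Proof.
intros HL eps Heps.
destruct (HL (ball L (mkposreal _ Heps)) (locally_ball _ _)) as [Q R HQ HR Hqr].
destruct HQ as [M1 HM1]. destruct HR as [M2 HM2].
destruct (nat_above (Rmax (- M1) M2 + 1)) as [N0 HN0].
exists N0. intros N HN.
assert (HNN : INR N0 <= INR N) by (apply le_INR; lia).
pose proof (Rmax_l (- M1) M2). pose proof (Rmax_r (- M1) M2).
destruct (Hqr (- INR N) (INR N)) as [y [Hy1 Hy2]].
- apply HM1. lra.
- apply HM2. lra.
- simpl in Hy1. rewrite (is_RInt_unique h _ _ y Hy1).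
  unfold ball in Hy2; simpl in Hy2; unfold AbsRing_ball, abs, minus, plus, opp in Hy2; simpl in Hy2.
  exact Hy2.
Qed.

Lemma fourier_zero L :
  (forall x, ex_series (aterm g x)) -> (forall x, ex_series (bterm g x)) ->
  (forall x, Series (aterm g x) + Series (bterm g x) = 0) ->
  (forall eps, 0 < eps -> exists N0, forall N, (N0 <= N)%nat -> forall x, 0 <= x <= 1 ->
     Rabs (Series (fun j => aterm g x (N + j))) <= eps) ->
  (forall eps, 0 < eps -> exists N0, forall N, (N0 <= N)%nat -> forall x, 0 <= x <= 1 ->
     Rabs (Series (fun j => bterm g x (N + j))) <= eps) ->
  is_RInt_gen h (Rbar_locally m_infty) (Rbar_locally p_infty) L -> L = 0.
Proof.
intros EA EB Z0 TA TB HL.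
assert (Hsum : forall N x, psum (aterm g x) N + psum (bterm g x) N =
   - (Series (fun j => aterm g x (N + j)) + Series (fun j => bterm g x (N + j)))).
{ intros N x.
  rewrite (is_series_unique _ _ (tail_series _ _ N (Series_correct _ (EA x)))).
  rewrite (is_series_unique _ _ (tail_series _ _ N (Series_correct _ (EB x)))).
  specialize (Z0 x). lra. }
destruct (Req_dec L 0) as [|HL0]; auto. exfalso.
assert (He : 0 < Rabs L / 4) by (pose proof (Rabs_pos_lt L HL0); lra).
destruct (TA _ He) as [N1 HN1]. destruct (TB _ He) as [N2 HN2].
destruct (gen_conv L HL _ He) as [N3 HN3].
set (N := (N1 + N2 + N3)%nat).
specialize (HN3 N ltac:(unfold N; lia)).
assert (Hb : Rabs (RInt h (- INR N) (INR N)) <= (1 - 0) * (Rabs L / 4 + Rabs L / 4)).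
{ rewrite IN. apply abs_RInt_le_const; [lra| |].
  - apply exR; intros; apply cont_mult; auto; apply cont_plus; [apply cont_pA|apply cont_pB].
  - intros x Hx. rewrite Rabs_mult, Hsum, Rabs_Ropp.
    specialize (HN1 N ltac:(unfold N; lia) x Hx). specialize (HN2 N ltac:(unfold N; lia) x Hx).
    pose proof (Rabs_triang (Series (fun j => aterm g x (N + j))) (Series (fun j => bterm g x (N + j)))).
    pose proof (Hpb x). pose proof (Rabs_pos (phi x)).
    pose proof (Rabs_pos (Series (fun j : nat => aterm g x (N + j)) + Series (fun j : nat => bterm g x (N + j)))).
    nra. }
pose proof (Rabs_triang (RInt h (- INR N) (INR N) - L) (- RInt h (- INR N) (INR N))).
replace (RInt h (- INR N) (INR N) - L + - RInt h (- INR N) (INR N)) with (- L) in H by ring.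
rewrite !Rabs_Ropp in H. lra.
Qed.

End Main.

Lemma gen_fst (f : R -> C) (Fa Fb : (R -> Prop) -> Prop) (l : C) :
  Filter Fa -> Filter Fb ->
  is_RInt_gen f Fa Fb l -> is_RInt_gen (fun t => fst (f t)) Fa Fb (fst l).
Proof.
intros FFa FFb H P [eps HP].
specialize (H (fun y : C => P (fst y))).
assert (Hl : locally l (fun y : C => P (fst y))).
{ exists eps. intros y [Hy1 Hy2]. apply HP. exact Hy1. }
specialize (H Hl). unfold filtermapi in *.
eapply filter_imp; [|exact H].
intros [a b] [y [Hy1 Hy2]]. exists (fst y). split; auto.
simpl in *.
apply (is_RInt_fct_extend_fst (U:=R_NormedModule) (V:=R_NormedModule) f a b y Hy1).
Qed.

Lemma gen_snd (f : R -> C) (Fa Fb : (R -> Prop) -> Prop) (l : C) :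
  Filter Fa -> Filter Fb ->
  is_RInt_gen f Fa Fb l -> is_RInt_gen (fun t => snd (f t)) Fa Fb (snd l).
Proof.
intros FFa FFb H P [eps HP].
specialize (H (fun y : C => P (snd y))).
assert (Hl : locally l (fun y : C => P (snd y))).
{ exists eps. intros y [Hy1 Hy2]. apply HP. exact Hy2. }
specialize (H Hl). unfold filtermapi in *.
eapply filter_imp; [|exact H].
intros [a b] [y [Hy1 Hy2]]. exists (snd y). split; auto.
simpl in *.
apply (is_RInt_fct_extend_snd (U:=R_NormedModule) (V:=R_NormedModule) f a b y Hy1).
Qed.

Definition nsq (z : C) := fst z ^ 2 + snd z ^ 2.

Lemma nsq_mult z w : nsq (Cmult z w) = nsq z * nsq w.
Proof. destruct z, w. unfold nsq, Cmult; simpl. ring. Qed.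

Lemma nsq_factor a w : nsq (factor a w) = / (1 + (2 * PI * w / a) ^ 2).
Proof.
unfold factor, Cdiv. rewrite nsq_mult.
set (c := 2 * PI * w / a).
assert (E1 : Cplus (RtoC 1) (Cmult Ci (RtoC c)) = (1, c)).
{ unfold Cplus, Cmult, Ci, RtoC; simpl. f_equal; ring. }
rewrite E1. unfold nsq, cexpi, Cinv. cbn [fst snd].
pose proof (sin2_cos2 c) as Hsc. unfold Rsqr in Hsc.
replace (cos c ^ 2 + sin c ^ 2) with 1 by (simpl; lra).
assert (Hp : 0 < 1 + c ^ 2) by (pose proof (pow2_ge_0 c); lra).
field. lra.
Qed.

Lemma pp_pos a w N : 0 < nsq (partial_prod a w N).
Proof.
induction N; simpl.
- unfold nsq, RtoC; simpl. lra.
- rewrite nsq_mult, nsq_factor. apply Rmult_lt_0_compat; auto.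
  apply Rinv_0_lt_compat. pose proof (pow2_ge_0 (2 * PI * w / a N)). lra.
Qed.

Lemma exp_inv_bound x : 0 <= x -> exp (- x) <= / (1 + x).
Proof.
intros Hx. rewrite exp_Ropp. apply Rinv_le_contravar; [lra|]. apply exp_ineq1_le.
Qed.

Lemma pp_lb a w N : (forall nu, a nu <> 0) ->
  exp (- ((2 * PI * w) ^ 2 * psum (fun nu => / (a nu ^ 2)) N)) <= nsq (partial_prod a w N).
Proof.
intros Ha. induction N; cbn [partial_prod psum].
- unfold nsq, RtoC; simpl. rewrite Rmult_0_r, Ropp_0, exp_0. lra.
- rewrite nsq_mult, nsq_factor.
  replace (- ((2 * PI * w) ^ 2 * (psum (fun nu => / (a nu ^ 2)) N + / (a N ^ 2))))
    with (- ((2 * PI * w) ^ 2 * psum (fun nu => / (a nu ^ 2)) N) + - ((2 * PI * w) ^ 2 * / (a N ^ 2))) by ring.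
  rewrite exp_plus.
  assert (E : (2 * PI * w / a N) ^ 2 = (2 * PI * w) ^ 2 * / (a N ^ 2)) by (field; auto).
  rewrite E.
  assert (H0 : 0 <= (2 * PI * w) ^ 2 * / (a N ^ 2)).
  { apply Rmult_le_pos. apply pow2_ge_0. left; apply Rinv_0_lt_compat.
    pose proof (Ha N). apply pow2_gt_0 in H. simpl in H. simpl. lra. }
  apply Rmult_le_compat; try (left; apply exp_pos); auto.
  apply exp_inv_bound; auto.
Qed.

Lemma series_ge0 c S : (forall n, 0 <= c n) -> is_series c S -> 0 <= S.
Proof.
intros Hc HS. rewrite <- (is_series_unique _ _ HS).
replace 0 with (Series (fun n => 0 * c n)).
- apply Series_le; [intros n; pose proof (Hc n); split; lra|]. eexists; eauto.
- rewrite Series_scal_l. ring.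
Qed.

Lemma psum_le c S N : (forall n, 0 <= c n) -> is_series c S -> psum c N <= S.
Proof.
intros Hc HS. pose proof (tail_series c S N HS) as H.
apply series_ge0 in H; [lra|]. intros; apply Hc.
Qed.

Lemma v_nonzero_inf a w v : (forall nu, a nu <> 0) -> ex_series (fun nu => / (a nu ^ 2)) ->
  filterlim (fun N => partial_prod a w N) eventually (locally v) ->
  ~ (fst v = 0 /\ snd v = 0).
Proof.
intros Ha [S HS] Hl [Hv1 Hv2].
assert (Hc : forall n, 0 <= / (a n ^ 2)).
{ intros n. left; apply Rinv_0_lt_compat. pose proof (Ha n). apply pow2_gt_0 in H. simpl in *. lra. }
pose proof (series_ge0 _ _ Hc HS) as HS0.
set (d := exp (- ((2 * PI * w) ^ 2 * S))).
assert (Hd0 : 0 < d) by apply exp_pos.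
assert (HK : 0 <= (2 * PI * w) ^ 2 * S) by (apply Rmult_le_pos; auto; apply pow2_ge_0).
assert (Hd1 : d <= 1).
{ unfold d. eapply Rle_trans. apply exp_inv_bound; auto.
  rewrite <- Rinv_1. apply Rinv_le_contravar; lra. }
assert (Hlb : forall N, d <= nsq (partial_prod a w N)).
{ intros N. eapply Rle_trans; [|apply pp_lb; auto]. unfold d.
  assert (psum (fun nu => / (a nu ^ 2)) N <= S) by (apply psum_le; auto).
  assert (- ((2 * PI * w) ^ 2 * S) <= - ((2 * PI * w) ^ 2 * psum (fun nu => / (a nu ^ 2)) N)).
  { apply Ropp_le_contravar. apply Rmult_le_compat_l; auto. apply pow2_ge_0. }
  destruct H0 as [H0|H0]; [left; apply exp_increasing; auto| rewrite H0; lra]. }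
assert (He : 0 < d / 2) by lra.
destruct (Hl (ball v (mkposreal _ He)) (locally_ball _ _)) as [N0 HN0].
specialize (HN0 N0 (le_n _)). destruct HN0 as [B1 B2].
unfold ball in B1, B2; simpl in B1, B2; unfold AbsRing_ball, abs, minus, plus, opp in B1, B2; simpl in B1, B2.
rewrite Hv1 in B1. rewrite Hv2 in B2.
apply Rabs_lt_between in B1. apply Rabs_lt_between in B2.
specialize (Hlb N0). unfold nsq in Hlb.
set (x1 := fst (partial_prod a w N0)) in *. set (x2 := snd (partial_prod a w N0)) in *.
assert (x1 ^ 2 < (d/2)^2) by (simpl; nra).
assert (x2 ^ 2 < (d/2)^2) by (simpl; nra).
simpl in *. nra.
Qed.

Lemma gen_bound (f : R -> R) L : (forall t, continuous f t) -> (forall t, 0 <= f t) ->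
  is_RInt_gen f (Rbar_locally m_infty) (Rbar_locally p_infty) L ->
  forall a b, a <= b -> RInt f a b <= L + 1.
Proof.
intros Hc Hp HL a b Hab.
destruct (HL (ball L (mkposreal _ Rlt_0_1)) (locally_ball _ _)) as [Q R HQ HR Hqr].
destruct HQ as [M1 HM1]. destruct HR as [M2 HM2].
set (a' := Rmin a (M1 - 1)). set (b' := Rmax b (M2 + 1)).
assert (Ha' : a' <= a) by apply Rmin_l. assert (Hb' : b <= b') by apply Rmax_l.
assert (Ha'' : a' <= M1 - 1) by apply Rmin_r. assert (Hb'' : M2 + 1 <= b') by apply Rmax_r.
destruct (Hqr a' b') as [y [Hy1 Hy2]].
- apply HM1. lra.
- apply HM2. lra.
- simpl in Hy1. rewrite <- (is_RInt_unique f _ _ y Hy1) in Hy2.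
  unfold ball in Hy2; simpl in Hy2; unfold AbsRing_ball, abs, minus, plus, opp in Hy2; simpl in Hy2.
  apply Rabs_lt_between in Hy2.
  rewrite <- (RInt_Chasles f a' a b') in Hy2 by (apply exR; auto).
  rewrite <- (RInt_Chasles f a b b') in Hy2 by (apply exR; auto).
  unfold plus in Hy2; simpl in Hy2.
  pose proof (RInt_nn f a' a Ha' Hc Hp). pose proof (RInt_nn f b b' Hb' Hc Hp). lra.
Qed.

Lemma RInt_refl (g : R -> R) a b : (forall t, continuous g t) ->
  RInt (fun t => g (- t)) a b = RInt g (- b) (- a).
Proof.
intros Hc.
pose proof (RInt_correct (V:=R_CompleteNormedModule) g (- b) (- a) (exR g _ _ Hc)) as H.
apply is_RInt_swap in H. apply (is_RInt_comp_opp (V:=R_NormedModule)) in H.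
apply (is_RInt_opp (V:=R_NormedModule)) in H.
apply is_RInt_unique.
eapply is_RInt_ext; [|].
2: { replace (RInt g (- b) (- a)) with (opp (opp (RInt g (- b) (- a)))). exact H.
     apply opp_opp. }
intros x _. simpl. apply opp_opp.
Qed.

Definition phi1 t := cos (- (2 * PI * t * (1 / 2))).
Definition phi2 t := sin (- (2 * PI * t * (1 / 2))).

Lemma phi1_c t : continuous phi1 t.
Proof. unfold phi1. apply (ex_derive_continuous (K:=R_AbsRing) (V:=R_NormedModule)). auto_derive. auto. Qed.
Lemma phi2_c t : continuous phi2 t.
Proof. unfold phi2. apply (ex_derive_continuous (K:=R_AbsRing) (V:=R_NormedModule)). auto_derive. auto. Qed.
Lemma phi1_b t : Rabs (phi1 t) <= 1.
Proof. unfold phi1. apply Rabs_le. apply COS_bound. Qed.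
Lemma phi2_b t : Rabs (phi2 t) <= 1.
Proof. unfold phi2. apply Rabs_le. apply SIN_bound. Qed.
Lemma phi1_p t : phi1 (t + 1) = - phi1 t.
Proof.
unfold phi1. replace (- (2 * PI * (t + 1) * (1 / 2))) with (- (2 * PI * t * (1 / 2)) - PI) by field.
rewrite cos_minus, cos_PI, sin_PI. ring.
Qed.
Lemma phi2_p t : phi2 (t + 1) = - phi2 t.
Proof.
unfold phi2. replace (- (2 * PI * (t + 1) * (1 / 2))) with (- (2 * PI * t * (1 / 2)) - PI) by field.
rewrite sin_minus, cos_PI, sin_PI. ring.
Qed.

Theorem mainTheorem5 (g : R -> R) :
  (forall t, continuous g t) ->
  totally_positive g ->
  ( (* infinite case *)
    (exists a : nat -> R,
       (forall nu, a nu <> 0) /\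
       ex_series (fun nu => / (a nu ^ 2)) /\
       forall w, exists v : C,
         is_fourier g w v /\
         filterlim (fun N => partial_prod a w N) eventually (locally v))
    \/
    (* finite case *)
    (exists (n : nat) (a : nat -> R),
       (forall nu, (nu < n)%nat -> a nu <> 0) /\
       forall w, is_fourier g w (partial_prod a w n)) ) ->
  exists Z : R -> R,
    (forall x, is_zak_half g x (Z x)) /\
    (forall x, Z (x + 2) = Z x) /\
    (exists x, Z x <> 0).
Proof.
intros Hc HTP Hcase.
pose proof (TPM.tp_nonneg g HTP) as Hp. pose proof (TPM.tp_R g HTP) as HR.
assert (Hv : exists v0 v, is_fourier g 0 v0 /\ is_fourier g (1/2) v /\ ~ (fst v = 0 /\ snd v = 0)).
{ destruct Hcase as [[a [Ha [Hs Hf]]] | [n [a [Ha Hf]]]].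
  - destruct (Hf 0) as [v0 [Hv0 _]]. destruct (Hf (1/2)) as [v [Hv Hl]].
    exists v0, v; repeat split; auto. apply (v_nonzero_inf a (1/2) v); auto.
  - exists (partial_prod a 0 n), (partial_prod a (1/2) n). repeat split; auto.
    intros [H1 H2]. pose proof (pp_pos a (1/2) n) as H. unfold nsq in H.
    rewrite H1, H2 in H. simpl in H; lra. }
destruct Hv as [v0 [v [Hv0 [Hv Hvnz]]]].
unfold is_fourier in Hv0, Hv.
assert (Hg0 : is_RInt_gen g (Rbar_locally m_infty) (Rbar_locally p_infty) (fst v0)).
{ apply gen_fst in Hv0; try apply Rbar_locally_filter.
  replace g with (fun t => fst (Cmult (RtoC (g t)) (cexpi (- (2 * PI * t * 0))))); auto.
  apply functional_extensionality. intros t. unfold Cmult, RtoC, cexpi; simpl.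
  rewrite Rmult_0_r, Ropp_0, cos_0, sin_0. ring. }
set (B := fst v0 + 1).
assert (HBg : forall a b, a <= b -> RInt g a b <= B) by (apply gen_bound; auto).
set (G := fun t => g (- t)).
assert (HGc : forall t, continuous G t).
{ intros t. unfold G. apply (continuous_comp (fun x => - x) g).
  apply (continuous_opp (V:=R_NormedModule) (fun x => x)). apply continuous_id. apply Hc. }
assert (HGp : forall t, 0 <= G t) by (intros; apply Hp).
assert (HGR : forall u v, u <= v -> G u * G (v+1) <= G (u+1) * G v).
{ intros u w Huw. unfold G. specialize (HR (- w - 1) (- u - 1) ltac:(lra)).
  replace (- (w + 1)) with (- w - 1) by ring. replace (- (u + 1)) with (- u - 1) by ring.
  replace (- u - 1 + 1) with (- u) in HR by ring. replace (- w - 1 + 1) with (- w) in HR by ring.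
  lra. }
assert (HBG : forall a b, a <= b -> RInt G a b <= B).
{ intros a b Hab. unfold G. rewrite RInt_refl by auto. apply HBg. lra. }
destruct (decay g Hc Hp HR B HBg) as [p1 [rho1 [Hr1 Hd1]]].
destruct (decay G HGc HGp HGR B HBG) as [p2 [rho2 [Hr2 Hd2]]].
assert (EA : forall x, ex_series (aterm g x)).
{ intros x. apply (series_ex g p1 rho1); auto. }
assert (EB : forall x, ex_series (bterm g x)).
{ intros x. pose proof (series_ex G p2 rho2 Hr2 HGp Hd2 (- x)) as H.
  apply (ex_series_incr_1 (V:=R_NormedModule)) in H.
  eapply ex_series_ext; [|exact H]. intros k. unfold bterm, G. f_equal. f_equal. ring. }
set (Z := fun x => Series (aterm g x) + Series (bterm g x)).
assert (Z1 : forall x, Z (x + 1) = - Z x).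
{ intros x. unfold Z.
  rewrite (Series_incr_1 (aterm g x) (EA x)).
  rewrite (Series_incr_1 (bterm g (x + 1)) (EB (x + 1))).
  rewrite (Series_ext (fun k => aterm g x (S k)) (fun k => -1 * aterm g (x + 1) k)).
  2: { intros k. unfold aterm. rewrite S_INR. simpl. 
       replace (x + (INR k + 1)) with (x + 1 + INR k) by ring. ring. }
  rewrite (Series_ext (fun k => bterm g (x + 1) (S k)) (fun k => -1 * bterm g x k)).
  2: { intros k. unfold bterm. rewrite !S_INR.
       replace (x + 1 - (INR k + 1 + 1)) with (x - (INR k + 1)) by ring. simpl. ring. }
  rewrite !Series_scal_l. unfold aterm, bterm. simpl.
  replace (x + 0) with x by ring. replace (x + 1 - 1) with x by ring. ring. }
exists Z. split; [|split].
- intros x. exists (Series (aterm g x)), (Series (bterm g x)).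
  split; [apply Series_correct; apply EA|].
  split; [apply Series_correct; apply EB|reflexivity].
- intros x. replace (x + 2) with (x + 1 + 1) by ring. rewrite !Z1. ring.
- apply NNPP. intros Hno.
  assert (Z0 : forall x, Series (aterm g x) + Series (bterm g x) = 0).
  { intros x. destruct (Req_dec (Z x) 0) as [H|H]; auto. exfalso; apply Hno; exists x; auto. }
  assert (TA : forall eps, 0 < eps -> exists N0, forall N, (N0 <= N)%nat -> forall x, 0 <= x <= 1 ->
     Rabs (Series (fun j => aterm g x (N + j))) <= eps).
  { intros eps Heps. destruct (tail_unif g p1 rho1 Hr1 Hp Hc Hd1 0 1 ltac:(lra) eps Heps) as [N0 HN0].
    exists N0. intros N HN x Hx. apply (HN0 N HN x Hx). }
  assert (TB : forall eps, 0 < eps -> exists N0, forall N, (N0 <= N)%nat -> forall x, 0 <= x <= 1 ->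
     Rabs (Series (fun j => bterm g x (N + j))) <= eps).
  { intros eps Heps. destruct (tail_unif G p2 rho2 Hr2 HGp HGc Hd2 (-1) 0 ltac:(lra) eps Heps) as [N0 HN0].
    exists N0. intros N HN x Hx.
    rewrite (Series_ext _ (fun j => (-1) ^ (S N + j) * G (- x + INR (S N + j)))).
    + apply HN0; [lia|lra].
    + intros j. unfold bterm, G. simpl. f_equal. f_equal. ring. }
  apply Hvnz. split.
  + apply (fourier_zero g phi1 Hc phi1_c phi1_b phi1_p (fst v) EA EB Z0 TA TB).
    apply gen_fst in Hv; try apply Rbar_locally_filter.
    replace (fun t => g t * phi1 t) with (fun t => fst (Cmult (RtoC (g t)) (cexpi (- (2 * PI * t * (1 / 2)))))); auto.
    apply functional_extensionality. intros t. unfold Cmult, RtoC, cexpi, phi1; simpl. ring.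
  + apply (fourier_zero g phi2 Hc phi2_c phi2_b phi2_p (snd v) EA EB Z0 TA TB).
    apply gen_snd in Hv; try apply Rbar_locally_filter.
    replace (fun t => g t * phi2 t) with (fun t => snd (Cmult (RtoC (g t)) (cexpi (- (2 * PI * t * (1 / 2)))))); auto.
    apply functional_extensionality. intros t. unfold Cmult, RtoC, cexpi, phi2; simpl. ring.
Qed.
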